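(* Let $U$ be a nonempty finite set, $R\subseteq U\times U$ serial and transitive, and $cl$ the closure operator of $M(Reg(U,R))$. Then $cl(X)=X$ for every $X\in Reg(U,R)$; i.e., every regular set is a closed set of $M(Reg(U,R))$.
   Context: $R_s(x)=\{y\in U\mid xRy\}$; $\underline{R}(X)=\{x\mid R_s(x)\subseteq X\}$, $\overline{R}(X)=\{x\mid R_s(x)\cap X\neq\emptyset\}$; $X$ is regular if $X=\underline{R}(\overline{R}(X))$, and $Reg(U,R)$ is the lattice of regular sets under inclusion, with least element $\emptyset$. $h(A)$ is the length of a maximal chain in $[\emptyset,A]$. $M(Reg(U,R))$ is the matroid on $U$ with independent sets $\{X\subseteq U\mid h(Y)\ge|X\cap Y|\ \forall Y\in Reg(U,R)\}$, rank function $r(X)=\max\{|I|\mid I\subseteq X \text{ independent}\}$, and closure operator $cl(X)=\{u\in U\mid r(X\cup\{u\})=r(X)\}$. *)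

(* Defs.v *)
From mathcomp Require Import all_boot.
Set Implicit Arguments. Unset Strict Implicit. Unset Printing Implicit Defensive.

Section RoughMatroid.
Variables (U : finType) (R : rel U).

Definition Rs (x : U) : {set U} := [set y | R x y].

Definition lowerR (X : {set U}) : {set U} := [set x | Rs x \subset X].
Definition upperR (X : {set U}) : {set U} := [set x | Rs x :&: X != set0].

Definition regular (X : {set U}) : bool := X == lowerR (upperR X).

Definition chainb (A : {set U}) (k : nat) : bool :=
  [exists c : {ffun 'I_k.+1 -> {set U}},
     [&& c ord0 == set0, c ord_max == A,
         [forall i, regular (c i)] &
         [forall i : 'I_k.+1, forall j : 'I_k.+1, (i < j)%N ==> (c i \proper c j)]]].

(* h(A): length of a maximal chain in [set0, A] (taken as the maximum length,
   i.e. the height of A in Reg(U,R); chains have length <= #|U|). *)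
Definition h (A : {set U}) : nat := \max_(k < #|U|.+1 | chainb A k) k.

Definition indep (X : {set U}) : bool :=
  [forall Y : {set U}, regular Y ==> (#|X :&: Y| <= h Y)].

Definition rank (X : {set U}) : nat :=
  \max_(I in powerset X | indep I) #|I|.

Definition cl (X : {set U}) : {set U} :=
  [set u | rank (u |: X) == rank X].

End RoughMatroid.

(* Main.v *)
Require Import Defs.
From mathcomp Require Import all_boot.
Set Implicit Arguments. Unset Strict Implicit. Unset Printing Implicit Defensive.

Section Aux.
Variables (U : finType) (R : rel U).
Hypothesis hserial : forall x : U, exists y : U, R x y.
Hypothesis htrans : transitive R.

Definition term (s : U) := [forall y, R s y ==> R y s].
Definition Reps : {set U} := [set s | term s && ([pick y in Rs R s] == Some s)].
Definition Phi (Q : {set U}) : {set U} := [set x | [forall r in Reps, R x r ==> (r \in Q)]].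

Lemma termP s : term s -> forall y, R s y -> R y s.
Proof. by move=> /forallP H y Hy; have := H y; rewrite Hy. Qed.

Lemma term_refl s : term s -> R s s.
Proof. move=> Ht; have [y Hy] := hserial s; exact: htrans (termP Ht Hy). Qed.

Lemma term_Rs s r : term s -> R s r -> Rs R r = Rs R s /\ term r.
Proof.
move=> Ht Hsr; have Hrs := termP Ht Hsr.
split.
  apply/setP=> w; rewrite !inE; apply/idP/idP => H.
    exact: htrans H.
  exact: htrans H.
apply/forallP=> w; apply/implyP=> Hrw.
have Hsw : R s w by exact: htrans Hrw.
exact: htrans (termP Ht Hsw) Hsr.
Qed.

Lemma exists_term x : exists2 z, R x z & term z.
Proof.
have [y0 Hy0] := hserial x.
have := @arg_minnP _ y0 (fun y => R x y) (fun y => #|Rs R y|) Hy0.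
case=> y Hxy Hmin.
have [z Hyz] := hserial y.
have Hsub : forall w, R y w -> Rs R w = Rs R y.
  move=> w Hyw; apply/eqP; rewrite eqEcard; apply/andP; split.
    by apply/subsetP=> v; rewrite !inE => Hv; exact: htrans Hv.
  by apply: Hmin; exact: htrans Hyw.
exists z; first exact: htrans Hyz.
apply/forallP=> w; apply/implyP=> Hzw.
have Hyw : R y w by exact: htrans Hzw.
have : z \in Rs R w by rewrite (Hsub _ Hyw) inE.
by rewrite inE.
Qed.

Lemma L0 x : exists2 r, r \in Reps & R x r.
Proof.
have [z Hxz Hz] := exists_term x.
have Hzz := term_refl Hz.
case Epk: [pick y in Rs R z] => [r|]; last first.
  by move: Epk; case: pickP => // /(_ z); rewrite inE Hzz.
have : r \in Rs R z by move: Epk; case: pickP => // r' Hr' [<-].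
rewrite inE => Hr.
have [E Htr] := term_Rs Hz Hr.
exists r; last exact: htrans Hr.
by rewrite inE Htr /= E Epk.
Qed.

Lemma L1 r r' : r \in Reps -> r' \in Reps -> R r r' -> r' = r.
Proof.
rewrite !inE => /andP[Ht /eqP Hp] /andP[Ht' /eqP Hp'] Hrr'.
have [E _] := term_Rs Ht Hrr'.
by move: Hp'; rewrite E Hp => -[].
Qed.

Lemma Reps_term r : r \in Reps -> term r.
Proof. by rewrite inE => /andP[]. Qed.

Lemma Phi_Reps (Q : {set U}) r : r \in Reps -> (r \in Phi Q) = (r \in Q).
Proof.
move=> Hr; rewrite inE; apply/forallP/idP => [H|Hq r'].
  by have := H r; rewrite Hr term_refl ?Reps_term.
apply/implyP=> Hr'; apply/implyP=> Hrr'.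
by rewrite (L1 Hr Hr' Hrr').
Qed.

Lemma PhiP (Q : {set U}) x : reflect (forall r, r \in Reps -> R x r -> r \in Q) (x \in Phi Q).
Proof.
rewrite inE; apply: (iffP forallP) => H r.
  by move=> Hr Hxr; have := H r; rewrite Hr Hxr.
by apply/implyP=> Hr; apply/implyP; apply: H.
Qed.

Lemma Phi_regular (Q : {set U}) : regular R (Phi Q).
Proof.
apply/eqP/setP=> x; rewrite [x \in lowerR _ _]inE.
apply/idP/subsetP => [Hx y|H].
  rewrite !inE => Hxy.
  have [r Hr Hyr] := L0 y.
  apply/set0Pn; exists r; rewrite in_setI [r \in Rs R y]inE Hyr /= Phi_Reps //.
  by apply: (elimT (PhiP Q x)) Hx r Hr (htrans Hxy Hyr).
apply/PhiP => r Hr Hxr.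
have := H r; rewrite !inE Hxr => /(_ isT) /set0Pn [w].
rewrite in_setI [w \in Rs R r]inE => /andP[Hrw Hw].
have Hwr := termP (Reps_term Hr) Hrw.
by move/PhiP: Hw => /(_ r Hr Hwr).
Qed.

Lemma regular_Phi (Y : {set U}) : regular R Y -> Y = Phi Y.
Proof.
move=> /eqP HY; apply/setP=> x; apply/idP/idP => Hx.
  apply/PhiP => r Hr Hxr.
  rewrite HY inE; apply/subsetP=> w; rewrite !inE => Hrw.
  move: Hx; rewrite HY inE => /subsetP /(_ r); rewrite !inE => /(_ Hxr) /set0Pn [v].
  rewrite !inE => /andP[Hrv Hv].
  rewrite -HY; apply/set0Pn; exists v; rewrite !inE Hv andbT.
  exact: htrans (termP (Reps_term Hr) Hrw) Hrv.
rewrite HY inE; apply/subsetP => y; rewrite !inE => Hxy.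
have [r Hr Hyr] := L0 y.
apply/set0Pn; exists r; rewrite !inE Hyr /=.
by move/PhiP: Hx; apply => //; exact: htrans Hyr.
Qed.

Lemma Phi_sub (A B : {set U}) : A :&: Reps \subset B -> Phi A \subset Phi B.
Proof.
move=> /subsetP H; apply/subsetP => x /PhiP Hx; apply/PhiP => r Hr Hxr.
by apply: H; rewrite inE Hr andbT; exact: Hx.
Qed.

Lemma Phi_eq (A B : {set U}) : A :&: Reps = B :&: Reps -> Phi A = Phi B.
Proof.
move=> E; apply/eqP; rewrite eqEsubset !Phi_sub //.
  by rewrite -E; apply/subsetP=> x; rewrite inE => /andP[].
by rewrite E; apply/subsetP=> x; rewrite inE => /andP[].
Qed.

Lemma chain_le (Y : {set U}) k : chainb R Y k -> k <= #|Y :&: Reps|.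
Proof.
case/existsP => c /and4P [/eqP c0 /eqP ck /forallP creg /forallP cinc].
suff H : forall i, i <= k -> i <= #|c (inord i) :&: Reps|.
  have := H k (leqnn k).
  suff -> : (inord k : 'I_k.+1) = ord_max by rewrite ck.
  by apply/val_inj; rewrite /= inordK.
elim=> [|i IH] Hi //.
have Hi' : i <= k by apply: ltnW.
apply: leq_ltn_trans (IH Hi') _.
apply: proper_card.
have := cinc (inord i) => /forallP /(_ (inord i.+1)).
rewrite !inordK ?ltnS // leqnn /= => Hp.
rewrite properEneq; apply/andP; split; last first.
  by apply: setSI; exact: proper_sub.
apply/eqP => E.
have := Phi_eq E.
rewrite -!regular_Phi // => E'.
by move: Hp; rewrite E' properE subxx.
Qed.

Lemma h_le (Y : {set U}) : h R Y <= #|Y :&: Reps|.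
Proof. by apply/bigmax_leqP => k Hk; exact: chain_le. Qed.

Lemma chain_ge (x0 : U) (Y : {set U}) : regular R Y -> chainb R Y #|Y :&: Reps|.
Proof.
move=> HY.
set n := #|Y :&: Reps|.
set s := enum (Y :&: Reps).
have sz : size s = n by rewrite /s -cardE.
have us : uniq s by apply: enum_uniq.
apply/existsP; exists [ffun i : 'I_n.+1 => Phi [set r in Y :&: Reps | index r s < i]].
apply/and4P; split.
- rewrite ffunE; apply/eqP/setP => x; rewrite in_set0.
  apply/negP => /PhiP Hx.
  have [r Hr Hxr] := L0 x.
  by have := Hx r Hr Hxr; rewrite inE ltn0 andbF.
- rewrite ffunE /=; apply/eqP.
  rewrite [RHS](regular_Phi HY); apply: Phi_eq.
  apply/setP => r; rewrite !in_setI in_set in_setI.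
  case HrY: (r \in Y) => //=; case Hr: (r \in Reps) => //=.
  by rewrite -sz index_mem /s mem_enum in_setI HrY Hr.
- by apply/forallP => i; rewrite ffunE; apply: Phi_regular.
- apply/forallP => i; apply/forallP => j; apply/implyP => Hij.
  rewrite !ffunE properE; apply/andP; split.
    apply: Phi_sub; apply/subsetP => r; rewrite in_setI in_set => /andP[/andP[H1 Hl] H2]; rewrite in_set H1 /=.
    exact: ltn_trans Hl Hij.
  have Hin : i < size s by rewrite sz; apply: leq_trans Hij _; rewrite -ltnS.
  set r0 := nth x0 s i.
  have Hr0 : r0 \in s by apply: mem_nth.
  have Hidx : index r0 s = i by apply: index_uniq.
  move: (Hr0); rewrite /s mem_enum in_setI => /andP[HrY HrR].
  apply/subsetPn; exists r0.
    by rewrite Phi_Reps // in_set in_setI HrY HrR Hidx.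
  by rewrite Phi_Reps // in_set in_setI HrY HrR Hidx ltnn.
Qed.

Lemma h_ge (x0 : U) (Y : {set U}) : regular R Y -> #|Y :&: Reps| <= h R Y.
Proof.
move=> HY.
have Hlt : #|Y :&: Reps| < #|U|.+1 by rewrite ltnS max_card.
exact: (@leq_bigmax_cond _ (fun k : 'I_#|U|.+1 => chainb R Y k) (fun k => nat_of_ord k) (Ordinal Hlt) (chain_ge x0 HY)).
Qed.

End Aux.

Theorem proposition7 (U : finType) (R : rel U)
  (hU : 0 < #|U|)
  (hserial : forall x : U, exists y : U, R x y)
  (htrans : transitive R) :
  forall X : {set U}, regular R X -> cl R X = X.
Proof.
move=> X HX; apply/setP => u; rewrite in_set.
case Hu: (u \in X).
  by rewrite (setUidPr _) ?sub1set ?Hu ?eqxx.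
apply/negbTE; rewrite neq_ltn; apply/orP; right.
set Q := X :&: Reps R.
have Hle : rank R X <= #|Q|.
  apply/bigmax_leqP => I /andP[]; rewrite powersetE => HIX HI.
  apply: leq_trans _ (h_le hserial htrans X).
  move/forallP: HI => /(_ X); rewrite HX /= => HI.
  by rewrite -(setIidPl HIX).
apply: leq_ltn_trans Hle _.
have HuQ : u \notin Q by rewrite in_setI Hu.
apply: (@leq_trans #|u |: Q|); first by rewrite cardsU1 HuQ.
rewrite /rank; apply: (@leq_bigmax_cond _ (fun I => (I \in powerset (u |: X)) && indep R I) (fun I => #|I|) (u |: Q)).
apply/andP; split.
  rewrite powersetE; apply/subsetP => v; rewrite !in_setU1 in_setI.
  by case: (v == u) => //= /andP[].
apply/forallP => Y; apply/implyP => HY.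
apply: leq_trans _ (h_ge hserial htrans u HY).
case HuY: (u \in Y).
  have -> : (u |: Q) :&: Y = u |: (Q :&: Y).
    apply/setP => v; rewrite !in_setI !in_setU1 in_setI.
    by case: eqP => [->|]; rewrite ?HuY.
  have HuQY : u \notin Q :&: Y by rewrite in_setI (negbTE HuQ).
  rewrite cardsU1 HuQY add1n.
  have : u \notin Phi R X by rewrite -(regular_Phi hserial htrans HX) Hu.
  move/PhiP => Hn.
  have : [exists r, [&& r \in Reps R, R u r & r \notin X]].
    case: existsP => // H; exfalso; apply: Hn => r Hr Hur.
    by apply/negPn/negP => HrX; apply: H; exists r; rewrite Hr Hur HrX.
  case/existsP => r /and3P [Hr Hur HrX].
  have HuPY : u \in Phi R Y by rewrite -(regular_Phi hserial htrans HY).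
  move/PhiP: HuPY => /(_ r Hr Hur) HrY.
  apply: proper_card; rewrite properE; apply/andP; split.
    apply/subsetP => v; rewrite !in_setI => /andP[/andP[_ ->] ->]; by [].
  apply/subsetPn; exists r; first by rewrite in_setI HrY Hr.
  by rewrite !in_setI (negbTE HrX).
have -> : (u |: Q) :&: Y = Q :&: Y.
  apply/setP => v; rewrite /Q !in_setI !in_setU1 in_setI.
  by case: eqP => [->|_] /=; rewrite ?HuY ?Hu ?andbF.
apply: subset_leq_card; apply/subsetP => v; rewrite !in_setI => /andP[/andP[_ ->] ->]; by [].
Qed.
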